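(* Let $k=\mathbb{F}_q$ with $q$ odd, $q>3$, let $n\ge1$, $A=M_{2n}(k)$, $J_{2n}=\begin{pmatrix}0&I_n\\-I_n&0\end{pmatrix}$, and $a^{\sim}=J_{2n}a^{t}J_{2n}^{-1}$ for $a\in A$. Let $V=k^{2n}$ (row vectors, with $A$ acting on the right), and let $[x,y]=\langle x,yJ_{2n}\rangle$ where $\langle\cdot,\cdot\rangle$ is the standard dot product. For every $u\in A^{\times}$ with $u^{\sim}=u$, the map $Q_u:V^2\to k$, $Q_u((x,y))=[xu,y]$, is a nondegenerate split quadratic form on the $4n$-dimensional $k$-vector space $V^2$. Moreover, for any two such $u,u'\in A^{\times}$ with $u^{\sim}=u$, $u'^{\sim}=u'$, the quadratic forms $Q_u$ and $Q_{u'}$ are equivalent.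
   Context: A quadratic form on a finite-dimensional vector space over a field of odd characteristic is nondegenerate if its associated symmetric bilinear form is nondegenerate, and split if it is equivalent to an orthogonal sum of hyperbolic planes. Two quadratic forms $Q,Q'$ on $V^2$ are equivalent if $Q'=Q\circ g$ for some linear automorphism $g$. *)

(* Defs.v *)
From HB Require Import structures.
From mathcomp Require Import all_boot all_order all_algebra all_field.
Set Implicit Arguments. Unset Strict Implicit. Unset Printing Implicit Defensive.
Import GRing.Theory Num.Theory.
Local Open Scope ring_scope.

Section QF.
Variable k : fieldType.

Definition is_quadratic_form m (Q : 'rV[k]_m -> k) : Prop :=
  exists M : 'M[k]_m, forall x, Q x = (x *m M *m x^T) 0 0.

Definition polar m (Q : 'rV[k]_m -> k) (x y : 'rV[k]_m) : k :=
  Q (x + y) - Q x - Q y.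

Definition qf_nondegenerate m (Q : 'rV[k]_m -> k) : Prop :=
  forall x, (forall y, polar Q x y = 0) -> x = 0.

Definition qf_equiv m (Q Q' : 'rV[k]_m -> k) : Prop :=
  exists g : 'M[k]_m, g \in unitmx /\ forall v, Q' v = Q (v *m g).

(* orthogonal sum of hyperbolic planes: x_0 x_1 + x_2 x_3 + ... *)
Definition hyperbolic_form m (v : 'rV[k]_m) : k :=
  \sum_(i < m) \sum_(j < m | ~~ odd i && (nat_of_ord j == i.+1)) v 0 i * v 0 j.

Definition qf_split m (Q : 'rV[k]_m -> k) : Prop :=
  ~~ odd m /\ qf_equiv Q (@hyperbolic_form m).

Definition Jmx n : 'M[k]_(n + n) := block_mx 0 1%:M (- 1%:M) 0.

Definition sym_tilde n (a : 'M[k]_(n + n)) : 'M[k]_(n + n) :=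
  Jmx n *m a^T *m invmx (Jmx n).

Definition symp n (x y : 'rV[k]_(n + n)) : k := (x *m (y *m Jmx n)^T) 0 0.

Definition Qu n (u : 'M[k]_(n + n)) (v : 'rV[k]_((n + n) + (n + n))) : k :=
  symp (lsubmx v *m u) (rsubmx v).

End QF.

(* Main.v *)
Require Import Defs.
From HB Require Import structures.
From mathcomp Require Import all_boot all_order all_algebra all_field.
From mathcomp Require Import fingroup perm zify ring.
Import GRing.Theory.
Set Implicit Arguments. Unset Strict Implicit.
Local Open Scope ring_scope.

Section Aux.
Variable k : fieldType.

Lemma Jmx_unit n : Jmx k n \in unitmx.
Proof.
have h : Jmx k n *m (- Jmx k n) = 1%:M.
  rewrite mulmxN /Jmx mulmx_block !mul0mx !mulmx0 !mul1mx !mulmx1 !add0r !addr0.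
  by rewrite opp_block_mx !opprK !oppr0 -scalar_mx_block.
by case: (mulmx1_unit h).
Qed.

Definition Nmx n (u : 'M[k]_(n + n)) := u *m (Jmx k n)^T.

Lemma QuE n (u : 'M[k]_(n + n)) v :
  Qu u v = (lsubmx v *m Nmx u *m (rsubmx v)^T) 0 0.
Proof. by rewrite /Qu /symp /Nmx trmx_mul !mulmxA. Qed.

Definition Q0 m (w : 'rV[k]_(m + m)) : k := (lsubmx w *m (rsubmx w)^T) 0 0.

Definition Dmx n (u : 'M[k]_(n + n)) : 'M[k]_((n + n) + (n + n)) :=
  block_mx 1%:M 0 0 (invmx (Nmx u))^T.

Lemma Nmx_unit n (u : 'M[k]_(n + n)) : u \in unitmx -> Nmx u \in unitmx.
Proof. by move=> hu; rewrite unitmx_mul hu unitmx_tr Jmx_unit. Qed.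

Lemma Dmx_unit n (u : 'M[k]_(n + n)) : u \in unitmx -> Dmx u \in unitmx.
Proof.
by move=> hu; rewrite block_diag_mx_unit unitmx1 unitmx_tr unitmx_inv Nmx_unit.
Qed.

Lemma Q0_Qu n (u : 'M[k]_(n + n)) w : u \in unitmx -> Q0 w = Qu u (w *m Dmx u).
Proof.
move=> hu; rewrite QuE.
have -> : w *m Dmx u = row_mx (lsubmx w) (rsubmx w *m (invmx (Nmx u))^T).
  by rewrite /Dmx -{1}(hsubmxK w) mul_row_block !mulmx0 !mulmx1 !addr0 add0r.
rewrite row_mxKl row_mxKr /Q0 trmx_mul trmxK !mulmxA.
by rewrite -(mulmxA _ u) -/(Nmx u) -(mulmxA (lsubmx w) (Nmx u)) mulmxV ?Nmx_unit // mulmx1.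
Qed.


Lemma row_zero m (a : 'rV[k]_m) : (forall y : 'rV[k]_m, (a *m y^T) 0 0 = 0) -> a = 0.
Proof.
move=> H; apply/rowP => j; have := H (delta_mx 0 j).
rewrite mxE (bigD1 j) //= big1 => [|i ij]; last by rewrite !mxE eqxx /= (negbTE ij) mulr0.
by rewrite !mxE !eqxx mulr1 addr0 => ->.
Qed.

Lemma polarE n (u : 'M[k]_(n + n)) v w :
  polar (Qu u) v w = (lsubmx v *m Nmx u *m (rsubmx w)^T) 0 0
                   + (lsubmx w *m Nmx u *m (rsubmx v)^T) 0 0.
Proof.
rewrite /polar !QuE !linearD /= !mulmxDl.
set A := lsubmx v *m _ *m (rsubmx v)^T; set B := lsubmx w *m _ *m (rsubmx v)^T.
set C := lsubmx v *m _ *m (rsubmx w)^T; set D := lsubmx w *m _ *m (rsubmx w)^T.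
rewrite !mxE; ring. Qed.

Lemma Qu_nondeg n (u : 'M[k]_(n + n)) : u \in unitmx -> qf_nondegenerate (Qu u).
Proof.
move=> hu x H; set N := Nmx u.
have hN : N \in unitmx by exact: Nmx_unit.
have h1 : lsubmx x *m N = 0.
  apply: row_zero => y; have := H (row_mx 0 y).
  by rewrite polarE row_mxKl row_mxKr !mul0mx [(0 : 'M_1) 0 0]mxE addr0.
have h2 : rsubmx x *m N^T = 0.
  apply: row_zero => y; have := H (row_mx y 0).
  rewrite polarE row_mxKl row_mxKr trmx0 mulmx0 [(0 : 'M_1) 0 0]mxE add0r => <-.
  transitivity (((y *m N *m (rsubmx x)^T)^T) 0 0); last by rewrite mxE.
  by rewrite !trmx_mul !trmxK !mulmxA.
have ha : lsubmx x = 0 by rewrite -(mulmxK hN (lsubmx x)) h1 mul0mx.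
have hN' : N^T \in unitmx by rewrite unitmx_tr.
have hb : rsubmx x = 0 by rewrite -(mulmxK hN' (rsubmx x)) h2 mul0mx.
by rewrite -(hsubmxK x) ha hb row_mx0.
Qed.

Lemma Qu_quad n (u : 'M[k]_(n + n)) : is_quadratic_form (Qu u).
Proof.
exists (block_mx 0 (Nmx u) 0 0) => v.
rewrite QuE -[in RHS](hsubmxK v) mul_row_block tr_row_mx mul_row_col.
rewrite ?mul0mx ?mulmx0 ?addr0 ?add0r. by rewrite (mul0mx _ ((lsubmx v)^T)) add0r.
Qed.


Section Perm.
Variable m : nat.
Definition fn (j : 'I_(m + m)) : nat := if (j < m)%N then (2 * j)%N else (2 * (j - m)).+1.
Lemma fn_lt j : (fn j < m + m)%N.
Proof. rewrite /fn; have := ltn_ord j; case: ifP => h; lia. Qed.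
Definition fo j : 'I_(m + m) := Ordinal (fn_lt j).
Lemma fo_inj : injective fo.
Proof.
move=> i j /(congr1 val) /=; rewrite /fn => e; apply/val_inj => /=.
move: e; have := ltn_ord i; have := ltn_ord j.
case: ifP => hi; case: ifP => hj; lia.
Qed.
Definition sP : {perm 'I_(m + m)} := perm fo_inj.
Definition Pmx : 'M[k]_(m + m) := perm_mx sP^-1.

Lemma Pmx_unit : Pmx \in unitmx.
Proof. exact: unitmx_perm. Qed.

Lemma hyp_Q0 v : hyperbolic_form v = Q0 (v *m Pmx).
Proof.
rewrite /Pmx -col_permE /Q0 mxE /hyperbolic_form (reindex_inj fo_inj) /= big_split_ord /=.
rewrite [X in _ + X]big1 ?addr0 => [|i _]; last first.
  rewrite big_pred0 // => j; rewrite /= /fn /=.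
  have -> : (m + i < m)%N = false by lia.
  by rewrite addKn oddS negbK oddM.
apply: eq_bigr => i _.
have e1 : fn (lshift m i) = (2 * i)%N by rewrite /fn /= ltn_ord.
have e2 : fn (rshift m i) = (2 * i).+1.
  rewrite /fn /=; have -> : (m + i < m)%N = false by lia.
  by rewrite addKn.
rewrite (big_pred1 (fo (rshift m i))) => [|j]; last first.
  by rewrite e1 oddM /= -[RHS]val_eqE /= e2.
by rewrite !mxE !permE.
Qed.
End Perm.

End Aux.
Theorem mainTheorem3 (k : finFieldType) (n : nat) :
  odd #|k| -> (3 < #|k|)%N -> (0 < n)%N ->
  (forall u : 'M[k]_(n + n), u \in unitmx -> sym_tilde u = u ->
     [/\ is_quadratic_form (Qu u), qf_nondegenerate (Qu u) & qf_split (Qu u)])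
  /\
  (forall u u' : 'M[k]_(n + n), u \in unitmx -> sym_tilde u = u ->
     u' \in unitmx -> sym_tilde u' = u' -> qf_equiv (Qu u) (Qu u')).
Proof.
move=> _ _ _; split.
  move=> u hu _; split; first exact: Qu_quad; first exact: Qu_nondeg.
  split; first by rewrite !oddD addbb.
  exists (@Pmx k (n + n) *m Dmx u); split.
    by rewrite unitmx_mul Pmx_unit Dmx_unit.
  by move=> v; rewrite hyp_Q0 (Q0_Qu _ hu) mulmxA.
move=> u u' hu _ hu' _; exists (invmx (Dmx u') *m Dmx u); split.
  by rewrite unitmx_mul unitmx_inv !Dmx_unit.
move=> v; rewrite -{1}(mulmxKV (Dmx_unit hu') v) -(Q0_Qu _ hu') (Q0_Qu _ hu).
by rewrite mulmxA.
Qed.
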